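(* Let $(M,g)$ be a $\mathcal{W}^{\star}$-flat space-time (i.e. $\mathcal{W}^{\star}_{ijkl}=0$) that is a dust fluid, i.e. it satisfies Einstein's field equation $R_{ij}-\frac12 R g_{ij}+\Lambda g_{ij}=kT_{ij}$ with $T_{ij}=\mu u_iu_j$. Then $M$ is a vacuum space-time: $T_{ij}=0$.
   Context: A space-time is a $4$-dimensional Lorentzian manifold $(M,g)$ with Levi-Civita connection $\nabla$. $R_{ijkl}$ denotes the components of the Riemann curvature tensor, with index conventions such that the Ricci tensor is $R_{jk}=g^{il}R_{ijkl}$; $R=g^{jk}R_{jk}$ is the scalar curvature. The $\mathcal{W}^{\star}$-curvature tensor is $\mathcal{W}^{\star}_{ijkl}=R_{ijkl}-\tfrac{1}{3}\left[g_{jk}R_{il}-g_{jl}R_{ik}\right]$. $\Lambda$ is a constant and $k\neq0$ a constant; $\mu$ is a smooth function (energy density) and $u$ is a unit timelike vector field with $u_i=g_{ij}u^j$, $u_iu^i=-1$. *)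

(* Defs.v *)
(* Pointwise (component) formalization of the space-time data. *)
From HB Require Import structures.
From mathcomp Require Import all_boot all_order all_algebra.
Set Implicit Arguments. Unset Strict Implicit. Unset Printing Implicit Defensive.
Import Order.TTheory GRing.Theory Num.Theory.
Local Open Scope ring_scope.

Definition tensor4 (R : Type) := 'I_4 -> 'I_4 -> 'I_4 -> 'I_4 -> R.

Definition ginv (R : realFieldType) (g : 'M[R]_4) : 'M[R]_4 := invmx g.

Definition lorentz_diag (R : realFieldType) : 'M[R]_4 :=
  diag_mx (\row_(i < 4) (if i == ord0 then -1 else 1)).

Definition lorentzian (R : realFieldType) (g : 'M[R]_4) : Prop :=
  g^T = g /\ exists P : 'M[R]_4, P \in unitmx /\ P^T *m g *m P = lorentz_diag R.

Definition ricci (R : realFieldType) (g : 'M[R]_4) (Rm : tensor4 R) (j k : 'I_4) : R :=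
  \sum_(i < 4) \sum_(l < 4) ginv g i l * Rm i j k l.

Definition scal (R : realFieldType) (g : 'M[R]_4) (Rm : tensor4 R) : R :=
  \sum_(j < 4) \sum_(k < 4) ginv g j k * ricci g Rm j k.

Definition Wstar (R : realFieldType) (g : 'M[R]_4) (Rm : tensor4 R) : tensor4 R :=
  fun i j k l => Rm i j k l - 3%:R^-1 * (g j k * ricci g Rm i l - g j l * ricci g Rm i k).

Definition lower (R : realFieldType) (g : 'M[R]_4) (u : 'I_4 -> R) (i : 'I_4) : R :=
  \sum_(j < 4) g i j * u j.

Definition dustT (R : realFieldType) (g : 'M[R]_4) (mu : R) (u : 'I_4 -> R) (i j : 'I_4) : R :=
  mu * lower g u i * lower g u j.

(* Main.v *)
Require Import Defs.
From HB Require Import structures.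
From mathcomp Require Import all_boot all_order all_algebra.
From mathcomp Require Import ring lra.
Import Order.TTheory GRing.Theory Num.Theory.
Local Open Scope ring_scope.

Lemma unitG (R : realFieldType) (G : 'M[R]_4) : lorentzian G -> G \in unitmx.
Proof.
move=> [_ [P [_ HP]]].
have: \det (P^T *m G *m P) = -1.
  rewrite HP /lorentz_diag det_diag.
  rewrite !big_ord_recr big_ord0 /= !mxE /=. ring.
rewrite !det_mulmx det_tr unitmxE unitfE => H.
apply/eqP => H0; move: H; rewrite H0 mulr0 mul0r => /eqP.
by rewrite eq_sym oppr_eq0 oner_eq0.
Qed.

Lemma ricci_form (R : realFieldType) (G : 'M[R]_4) (Rm : tensor4 R) :
  G^T = G -> G \in unitmx ->
  (forall i j k' l, Wstar G Rm i j k' l = 0) ->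
  forall j k, ricci G Rm j k = 4%:R^-1 * scal G Rm * G j k.
Proof.
move=> Gs Gu W j k.
set ric := ricci G Rm; set S := scal G Rm.
have HR i j' k' l : Rm i j' k' l = 3%:R^-1 * (G j' k' * ric i l - G j' l * ric i k').
  by apply/eqP; rewrite -subr_eq0; apply/eqP; apply: W.
have E : ric j k = 3%:R^-1 * (G j k * S - \sum_i (\sum_l ginv G i l * G j l) * ric i k).
  transitivity (\sum_i \sum_l ginv G i l * Rm i j k l); first by [].
  transitivity (\sum_i \sum_l (3%:R^-1 * G j k * (ginv G i l * ric i l)
       - 3%:R^-1 * ((ginv G i l * G j l) * ric i k))).
    apply: eq_bigr => i _; apply: eq_bigr => l _; rewrite HR; ring.
  rewrite mulrBr mulrA /S /scal -/ric.
  rewrite !mulr_sumr -sumrB; apply: eq_bigr => i _.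
  rewrite sumrB; congr (_ - _).
    by rewrite mulr_sumr.
  rewrite mulr_suml mulr_sumr; apply: eq_bigr => l _; ring.
have D i : \sum_l ginv G i l * G j l = (1%:M : 'M[R]_4) j i.
  transitivity ((ginv G *m G) i j).
    rewrite mxE; apply: eq_bigr => l _.
    by rewrite -{2}Gs mxE.
  by rewrite /ginv mulVmx // !mxE eq_sym.
have D2 : \sum_i (\sum_l ginv G i l * G j l) * ric i k = ric j k.
  transitivity (((1%:M : 'M[R]_4) *m (\matrix_(a, b) ric a b)) j k).
    by rewrite mxE; apply: eq_bigr => i _; rewrite D; congr (_ * _); rewrite mxE.
  by rewrite mul1mx mxE.
rewrite D2 in E.
have h3 : (3%:R : R) != 0 by rewrite pnatr_eq0.
have h4 : (4%:R : R) != 0 by rewrite pnatr_eq0.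
move: E; set r := ric j k => E.
have E' : 3%:R * r = G j k * S - r by rewrite {1}E mulrA mulfV // mul1r.
apply: (mulfI h4); rewrite mulrA mulrA mulfV // mul1r.
rewrite (_ : 4%:R = 3%:R + 1 :> R); last by rewrite -natr1.
rewrite mulrDl mul1r E'; ring.
Qed.

Theorem mainTheorem18 (R : realFieldType) (M : Type)
  (g : M -> 'M[R]_4) (Rm : M -> tensor4 R) (u : M -> 'I_4 -> R) (mu : M -> R)
  (Lam k : R) :
  k != 0 ->
  (forall x, lorentzian (g x)) ->
  (forall x, \sum_(i < 4) lower (g x) (u x) i * u x i = -1) ->
  (forall x i j k' l, Wstar (g x) (Rm x) i j k' l = 0) ->
  (forall x i j, ricci (g x) (Rm x) i j - 2%:R^-1 * scal (g x) (Rm x) * g x i j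
                 + Lam * g x i j = k * dustT (g x) (mu x) (u x) i j) ->
  forall x i j, dustT (g x) (mu x) (u x) i j = 0.
Proof.
move=> hk hL hu hW hE x.
have Gu := @unitG R (g x) (hL x).
have Gs : (g x)^T = g x by case: (hL x).
have hr := @ricci_form R (g x) (Rm x) Gs Gu (hW x).
have hu0 := hu x; clear hu; rename hu0 into hu.
have hE0 := hE x; clear hE; rename hE0 into hE.
set G := g x in Gu Gs hr hE hu *.
set w := lower G (u x) in hu *.
set S := scal G (Rm x) in hr hE *.
set c := Lam - 4%:R^-1 * S.
have h2 : (2%:R : R) != 0 by rewrite pnatr_eq0.
have h4 : (4%:R : R) != 0 by rewrite pnatr_eq0.
have E i j : c * G i j = k * mu x * w i * w j.
  transitivity (k * dustT G (mu x) (u x) i j); last by rewrite /dustT -/w; ring.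
  rewrite -hE hr /c -/S.
  rewrite (_ : 4%:R = 2%:R * 2%:R :> R); last by rewrite -natrM.
  by field.
have hkm : k * mu x = - c.
  have L : \sum_i (\sum_j (c * G i j) * u x j) * u x i = - c.
    transitivity (c * \sum_i w i * u x i); last by rewrite hu; ring.
    rewrite mulr_sumr; apply: eq_bigr => i _.
    rewrite mulrA; congr (_ * _); rewrite /w /lower mulr_sumr.
    by apply: eq_bigr => j _; rewrite mulrA.
  rewrite -L.
  transitivity (k * mu x * (\sum_i w i * u x i) * (\sum_i w i * u x i)).
    by rewrite hu; ring.
  transitivity (\sum_i (w i * u x i) * (k * mu x * \sum_i w i * u x i)).
    by rewrite -mulr_suml; ring.
  apply: eq_bigr => i _.
  rewrite [in RHS](eq_bigr (fun j => k * mu x * w i * (w j * u x j))); last first.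
    by move=> j _; rewrite E; ring.
  rewrite -mulr_sumr; ring.
have c0 : c = 0.
  apply/eqP; apply/negPn/negP => cn.
  have Gw i j : G i j = - (w i * w j).
    apply: (mulfI cn); rewrite E hkm; ring.
  have Hu i : \sum_j ginv G i j * w j = u x i.
    transitivity ((ginv G *m (G *m \col_a u x a)) i ord0).
      rewrite mxE; apply: eq_bigr => j _; congr (_ * _).
      by rewrite mxE /w /lower; apply: eq_bigr => a _; rewrite mxE.
    by rewrite mulmxA /ginv mulVmx // mul1mx mxE.
  have T : \tr (ginv G *m G) = 1.
    rewrite /mxtrace.
    transitivity (- \sum_i w i * u x i); last by rewrite hu opprK.
    rewrite -sumrN; apply: eq_bigr => i _; rewrite mxE.
    rewrite -Hu mulr_sumr -sumrN; apply: eq_bigr => j _; rewrite Gw; ring.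
  move: T; rewrite /ginv mulVmx // mxtrace1 => /eqP.
  rewrite -subr_eq0 -(natrB _ (isT : (1 <= 4)%N)) pnatr_eq0 //.
have : k * mu x = 0 by rewrite hkm c0 oppr0.
move/eqP; rewrite mulf_eq0 (negPf hk) /= => /eqP m0 i j.
by rewrite /dustT m0 !mul0r.
Qed.
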